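(* Let $\overline{F}$ be a finite set, let $r=(r(i,j):i,j\in\overline{F})$ be an irreducible stochastic matrix (transition matrix of a homogeneous Markov chain $X$ on $\overline{F}$), and let $\boldsymbol{\alpha}=(\alpha_j:j\in\overline{F})\in[0,1]^{\overline{F}}$ be a non-zero vector of acceptance probabilities. Let $X^{(\boldsymbol{\alpha})}$ be the Markov chain obtained from $X$ by randomized skipping with acceptance probabilities $\boldsymbol{\alpha}$, with transition matrix $r^{(\boldsymbol{\alpha})}$, and let $B(\boldsymbol{\alpha})=\{j\in\overline{F}:\alpha_j=0\}$ (so $B(\boldsymbol{\alpha})\subsetneq\overline{F}$). Then \[ r^{(\boldsymbol{\alpha})}(i,j)=P\big(X^{(A)}(\tau^{(A)})=j\,\big|\,(X^{(A)}_0,Y^{(A)}_0)=(i,0)\big),\qquad i,j\in\overline{F}, \] the chain $X^{(\boldsymbol{\alpha})}$ is irreducible on $\overline{F}\setminus B(\boldsymbol{\alpha})$, and \[ r^{(\boldsymbol{\alpha})}=\sum_{k=0}^{\infty}\big(r I_{(1-\boldsymbol{\alpha})}\big)^{k} r I_{\boldsymbol{\alpha}}=\big(I-rI_{(1-\boldsymbol{\alpha})}\big)^{-1} r I_{\boldsymbol{\alpha}} . \]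
   Context: $I_{\boldsymbol{\alpha}}$ denotes the diagonal matrix indexed by $\overline{F}$ with diagonal entries $\alpha_j$, and $I_{(1-\boldsymbol{\alpha})}$ the diagonal matrix with diagonal entries $1-\alpha_j$; $I$ is the identity matrix. Randomized skipping: a random walker at state $i$ proposes a destination $j$ with probability $r(i,j)$; independently of the past given $j$, a Bernoulli experiment with success probability $\alpha_j$ is performed. On success the jump to $j$ is performed and the walker stays at $j$ for (at least) one time step. On failure the walker performs only an imaginary jump to $j$, spending no time there, and immediately proposes a new destination $l$ with probability $r(j,l)$, which is again accepted with probability $\alpha_l$, and so on, until some proposal is accepted; the accepted state is the next state of $X^{(\boldsymbol{\alpha})}$. The auxiliary chain $(X^{(A)},Y^{(A)})$ is the Markov chain on $\overline{F}\times\{0,1\}$ with transition probabilities $P(X^{(A)}_{n+1}=j,Y^{(A)}_{n+1}=1\mid X^{(A)}_n=i,Y^{(A)}_n=0)=r(i,j)\alpha_j$, $P(X^{(A)}_{n+1}=j,Y^{(A)}_{n+1}=0\mid X^{(A)}_n=i,Y^{(A)}_n=0)=r(i,j)(1-\alpha_j)$, and with all states in $\overline{F}\times\{1\}$ absorbing (transition probability $\delta_{ij}$ from $(i,1)$ to $(j,1)$, and $0$ to $(j,0)$); it is started in $\overline{F}\times\{0\}$. $\tau^{(A)}=\inf\{n\ge 1: Y^{(A)}_n=1\}$ is its absorption time. *)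

(* Defs.v *)
From mathcomp Require Import all_boot all_order all_algebra.
From mathcomp Require Import all_classical all_reals all_analysis.
Set Implicit Arguments. Unset Strict Implicit. Unset Printing Implicit Defensive.
Import Order.TTheory GRing.Theory Num.Theory numFieldNormedType.Exports.
Local Open Scope ring_scope.

(* The finite state space \overline{F} is 'I_n.+1 (it is nonempty since
   alpha is non-zero). Transition matrices are 'M[R]_n.+1. *)

Section Defs.
Variables (R : realType) (n : nat).
Notation S := 'I_n.+1.

Definition stochastic (r : 'M[R]_n.+1) : Prop :=
  (forall i j, 0 <= r i j) /\ (forall i, \sum_j r i j = 1).

Definition irreducible_on (A : {set S}) (P : 'M[R]_n.+1) : Prop :=
  forall i j, i \in A -> j \in A -> exists k : nat, 0 < (P ^+ k) i j.

Definition irreducible (P : 'M[R]_n.+1) : Prop := irreducible_on [set: S] P.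

Definition Ialpha (alpha : S -> R) : 'M[R]_n.+1 := diag_mx (\row_j alpha j).
Definition I1malpha (alpha : S -> R) : 'M[R]_n.+1 := diag_mx (\row_j (1 - alpha j)).

Definition Bset (alpha : S -> R) : {set S} := [set j | alpha j == 0].

(* A run of the procedure from i that accepts after k rejected proposals
   p 0, ..., p (k-1) and then accepts the proposal j.  The m-th visited
   (proposed) point is [pnode i p m] (with pnode i p 0 = i). *)
Definition pnode (i : S) (k : nat) (p : {ffun 'I_k -> S}) (m : nat) : S :=
  if m is m'.+1 then odflt i (omap p (insub m')) else i.

Definition skip_w (r : 'M[R]_n.+1) (alpha : S -> R) (k : nat) (i j : S) : R :=
  \sum_(p : {ffun 'I_k -> S})
     ((\prod_(m < k) (r (pnode i p m) (p m) * (1 - alpha (p m))))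
      * (r (pnode i p k) j * alpha j)).

Definition rskip (r : 'M[R]_n.+1) (alpha : S -> R) : 'M[R]_n.+1 :=
  \matrix_(i, j) limn (fun N => \sum_(k < N) skip_w r alpha k i j).

(* ---- The auxiliary chain (X^(A), Y^(A)) on S * bool (Y = 1 <-> true) ---- *)
Definition aux_P (r : 'M[R]_n.+1) (alpha : S -> R) (x y : S * bool) : R :=
  if x.2 then (x == y)%:R
  else if y.2 then r x.1 y.1 * alpha y.1 else r x.1 y.1 * (1 - alpha y.1).

Fixpoint aux_dist (r : 'M[R]_n.+1) (alpha : S -> R) (m : nat) (x0 y : S * bool) : R :=
  if m is m'.+1 then \sum_(x : S * bool) aux_dist r alpha m' x0 x * aux_P r alpha x y
  else (x0 == y)%:R.

(* P(X^(A)(tau^(A)) = j, tau^(A) < oo | (X_0,Y_0) = (i,0)):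
   since the states (.,1) are absorbing and Y_0 = 0,
   P(X_m = j, Y_m = 1) = P(tau <= m, X_tau = j), so this is the limit in m. *)
Definition aux_exit (r : 'M[R]_n.+1) (alpha : S -> R) (i j : S) : R :=
  limn (fun m => aux_dist r alpha m (i, false) (j, true)).

End Defs.

(* Main.v *)
Require Import Defs.
From mathcomp Require Import all_boot all_order all_algebra.
From mathcomp Require Import all_classical all_reals all_analysis.
Import Order.TTheory GRing.Theory Num.Theory numFieldNormedType.Exports.
Set Implicit Arguments. Unset Strict Implicit. Unset Printing Implicit Defensive.
Local Open Scope classical_set_scope.
Local Open Scope ring_scope.

Lemma cvg_sumfin (R : realType) (I : finType) (f : I -> nat -> R) (a : I -> R) :
  (forall i, f i n @[n --> \oo] --> a i) ->
  (\sum_i f i n) @[n --> \oo] --> \sum_i a i.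
Proof.
move=> H.
have -> : (fun n => \sum_i f i n) = (fun n => \sum_(i <- enum I) f i n).
  by apply: funext => n; rewrite big_enum.
rewrite -big_enum.
elim: (enum I) => [|i s IH].
  have -> : (fun n => \sum_(i <- [::]) f i n) = (fun=> 0).
    by apply: funext => n; rewrite big_nil.
  rewrite big_nil; exact: cvg_cst.
have -> : (fun n => \sum_(j <- i :: s) f j n) = (fun n => f i n + \sum_(j <- s) f j n).
  by apply: funext => n; rewrite big_cons.
rewrite big_cons; exact: cvgD.
Qed.

Lemma QE (R : realType) (n : nat) (r : 'M[R]_n.+1) (alpha : 'I_n.+1 -> R) i j :
  (r *m I1malpha alpha) i j = r i j * (1 - alpha j).
Proof. by rewrite /I1malpha mul_mx_diag !mxE. Qed.

Lemma AE (R : realType) (n : nat) (r : 'M[R]_n.+1) (alpha : 'I_n.+1 -> R) i j :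
  (r *m Ialpha alpha) i j = r i j * alpha j.
Proof. by rewrite /Ialpha mul_mx_diag !mxE. Qed.

Lemma expr_ge0 (R : realType) (n : nat) (A : 'M[R]_n.+1) :
  (forall i j, 0 <= A i j) -> forall k i j, 0 <= (A ^+ k) i j.
Proof.
move=> H; elim=> [|k IH] i j.
  by rewrite expr0 mxE ler0n.
rewrite exprS -mulmxE mxE; apply: sumr_ge0 => l _; exact: mulr_ge0.
Qed.

Definition csum {R : realType} {n : nat} (A : 'M[R]_n.+1) (m : nat) (i : 'I_n.+1) : R :=
  \sum_j (A ^+ m) i j.

Lemma mul_rowsum (R : realType) (n : nat) (A B : 'M[R]_n.+1) i :
  \sum_j (A * B) i j = \sum_l A i l * \sum_j B l j.
Proof.
rewrite -mulmxE.
under eq_bigr do rewrite mxE.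
rewrite exchange_big; apply: eq_bigr => l _; by rewrite mulr_sumr.
Qed.

Lemma csum_add (R : realType) (n : nat) (A : 'M[R]_n.+1) m K i :
  csum A (m + K) i = \sum_l (A ^+ m) i l * csum A K l.
Proof. by rewrite /csum exprD mul_rowsum. Qed.

Lemma csum_S (R : realType) (n : nat) (A : 'M[R]_n.+1) m i :
  csum A m.+1 i = \sum_l A i l * csum A m l.
Proof. by rewrite /csum exprS mul_rowsum. Qed.

Lemma csum_ge0 (R : realType) (n : nat) (A : 'M[R]_n.+1) :
  (forall i j, 0 <= A i j) -> forall m i, 0 <= csum A m i.
Proof. move=> H m i; apply: sumr_ge0 => j _; exact: expr_ge0. Qed.

Lemma csum_Sr (R : realType) (n : nat) (A : 'M[R]_n.+1) :
  (forall i j, 0 <= A i j) -> (forall i, \sum_j A i j <= 1) ->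
  forall m i, csum A m.+1 i <= csum A m i.
Proof.
move=> H0 H1 m i; rewrite /csum exprSr mul_rowsum.
apply: ler_sum => l _.
rewrite -[X in _ <= X]mulr1; apply: ler_wpM2l => //; exact: expr_ge0.
Qed.

Lemma csum_mono (R : realType) (n : nat) (A : 'M[R]_n.+1) :
  (forall i j, 0 <= A i j) -> (forall i, \sum_j A i j <= 1) ->
  forall m d i, csum A (m + d) i <= csum A m i.
Proof.
move=> H0 H1 m d i; elim: d => [|d IH]; first by rewrite addn0.
by rewrite addnS (le_trans (csum_Sr H0 H1 _ _)).
Qed.

Lemma csum_le1 (R : realType) (n : nat) (A : 'M[R]_n.+1) :
  (forall i j, 0 <= A i j) -> (forall i, \sum_j A i j <= 1) ->
  forall m i, csum A m i <= 1.
Proof.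
move=> H0 H1 m i; have := csum_mono H0 H1 0 m i; rewrite add0n => /le_trans; apply.
rewrite /csum expr0 (bigD1 i) //= mxE eqxx big1 ?addr0 // => j /negbTE ji.
by rewrite mxE eq_sym ji.
Qed.

Lemma csum0 (R : realType) (n : nat) (A : 'M[R]_n.+1) i : csum A 0 i = 1.
Proof.
rewrite /csum expr0 (bigD1 i) //= mxE eqxx big1 ?addr0 // => j /negbTE ji.
by rewrite mxE eq_sym ji.
Qed.

Lemma sum_pos_witness (R : realType) (I : finType) (F : I -> R) :
  0 < \sum_i F i -> exists l, 0 < F l.
Proof.
move=> H; have [/existsP [l Hl]|/existsPn Hn] := boolP [exists l, 0 < F l].
  by exists l.
exfalso; have : \sum_i F i <= 0.
  by apply: sumr_le0 => l _; rewrite leNgt; apply: Hn.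
by rewrite leNgt H.
Qed.

Lemma prod_pos_l (R : realType) (a b : R) : 0 <= a -> 0 < a * b -> 0 < a.
Proof.
move=> a0 ab; rewrite lt_def a0 andbT; apply/eqP => a00.
by move: ab; rewrite a00 mul0r ltxx.
Qed.

Lemma prod_pos_r (R : realType) (a b : R) : 0 <= b -> 0 < a * b -> 0 < b.
Proof. by move=> b0; rewrite mulrC; apply: prod_pos_l. Qed.

Lemma Q_strict (R : realType) (n : nat) (r : 'M[R]_n.+1) (alpha : 'I_n.+1 -> R)
   (c : 'I_n.+1 -> R) i l :
  stochastic r -> (forall j, 0 <= alpha j <= 1) ->
  (forall x, 0 <= c x <= 1) -> 0 < r i l -> (1 - alpha l) * c l < 1 ->
  \sum_x (r *m I1malpha alpha) i x * c x < 1.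
Proof.
move=> [r0 r1] ha hc ril hl.
rewrite -(r1 i) (bigD1 l) //= [X in _ < X](bigD1 l) //=.
apply: ltr_leD.
  by rewrite QE -mulrA -[X in _ < X]mulr1 ltr_pM2l.
apply: ler_sum => x _; rewrite QE -mulrA -[X in _ <= X]mulr1.
apply: ler_wpM2l => //.
have /andP [a0 a1] := ha x; have /andP [c0 c1] := hc x.
apply: mulr_ile1 => //; first by rewrite subr_ge0.
by rewrite lerBlDr lerDl.
Qed.

Lemma c_lt1 (R : realType) (n : nat) (r : 'M[R]_n.+1) (alpha : 'I_n.+1 -> R) j0 :
  stochastic r -> (forall j, 0 <= alpha j <= 1) -> 0 < alpha j0 ->
  forall k i, 0 < (r ^+ k.+1) i j0 -> csum (r *m I1malpha alpha) k.+1 i < 1.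
Proof.
move=> hr ha hj0.
have Q0 : forall i j, 0 <= (r *m I1malpha alpha) i j.
  move=> i j; rewrite QE; apply: mulr_ge0; first by case: hr.
  by have /andP [_ a1] := ha j; rewrite subr_ge0.
have Q1 : forall i, \sum_j (r *m I1malpha alpha) i j <= 1.
  move=> i; case: hr => r0 r1; rewrite -(r1 i); apply: ler_sum => j _.
  rewrite QE -[X in _ <= X]mulr1; apply: ler_wpM2l => //.
  by have /andP [a0 _] := ha j; rewrite lerBlDr lerDl.
have hc : forall m x, 0 <= csum (r *m I1malpha alpha) m x <= 1.
  by move=> m x; rewrite csum_ge0 // csum_le1.
elim=> [|k IH] i.
  rewrite expr1 => ri0; rewrite csum_S; apply: (Q_strict (l := j0)) => //.
  by rewrite csum0 mulr1 ltrBlDr ltrDl.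
rewrite exprS mxE => /sum_pos_witness [l hl].
have rl : 0 < r i l by apply: prod_pos_l hl; case: hr.
have rl2 : 0 < (r ^+ k.+1) l j0.
  by apply: prod_pos_r hl; apply: expr_ge0; case: hr.
rewrite csum_S; apply: (Q_strict (l := l)) => //.
apply: le_lt_trans (IH _ rl2).
have /andP [c0 _] := hc k.+1 l; have /andP [a0 a1] := ha l.
by apply: ler_piMl => //; rewrite ?subr_ge0 // lerBlDr lerDl.
Qed.

Lemma sum_widen (R : realType) (f : nat -> R) N K :
  (forall k, 0 <= f k) -> \sum_(k < N) f k <= \sum_(k < N + K) f k.
Proof.
move=> f0; rewrite big_split_ord /= lerDl; apply: sumr_ge0 => k _; exact: f0.
Qed.

Lemma csum_bound (R : realType) (n : nat) (A : 'M[R]_n.+1) K (d : R) :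
  (forall i j, 0 <= A i j) -> (forall i, \sum_j A i j <= 1) ->
  d < 1 -> (forall i, csum A K i <= d) ->
  forall N i, \sum_(k < N) csum A k i <= K%:R / (1 - d).
Proof.
move=> H0 H1 d1 hK N i.
set T := \sum_(k < N) csum A k i.
have hT : T <= K%:R + d * T.
  apply: (le_trans (@sum_widen _ (fun k => csum A k i) N K (fun k => csum_ge0 H0 k i))).
  rewrite addnC big_split_ord /=; apply: lerD.
    apply: (@le_trans _ _ (\sum_(k < K) (1 : R))); last by rewrite sumr_const card_ord.
    by apply: ler_sum => k _; apply: csum_le1.
  rewrite /T mulr_sumr; apply: ler_sum => k _.
  rewrite addnC csum_add /csum mulr_sumr; apply: ler_sum => l _.
  rewrite mulrC; apply: ler_wpM2r; first exact: (expr_ge0 H0).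
  exact: hK.
rewrite ler_pdivlMr ?subr_gt0 //.
by rewrite mulrBr mulr1 lerBlDr (mulrC T d).
Qed.

Lemma Q_nonneg (R : realType) (n : nat) (r : 'M[R]_n.+1) (alpha : 'I_n.+1 -> R) :
  stochastic r -> (forall j, 0 <= alpha j <= 1) ->
  forall i j, 0 <= (r *m I1malpha alpha) i j.
Proof.
move=> hr ha i j; rewrite QE; apply: mulr_ge0; first by case: hr.
by have /andP [_ a1] := ha j; rewrite subr_ge0.
Qed.

Lemma Q_rows (R : realType) (n : nat) (r : 'M[R]_n.+1) (alpha : 'I_n.+1 -> R) :
  stochastic r -> (forall j, 0 <= alpha j <= 1) ->
  forall i, \sum_j (r *m I1malpha alpha) i j <= 1.
Proof.
move=> hr ha i; case: hr => r0 r1; rewrite -(r1 i); apply: ler_sum => j _.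
rewrite QE -[X in _ <= X]mulr1; apply: ler_wpM2l => //.
by have /andP [a0 _] := ha j; rewrite lerBlDr lerDl.
Qed.

Lemma exists_K (R : realType) (n : nat) (r : 'M[R]_n.+1) (alpha : 'I_n.+1 -> R) :
  stochastic r -> irreducible r ->
  (forall j, 0 <= alpha j <= 1) -> (exists j, alpha j != 0) ->
  exists K d, d < 1 /\ forall i, csum (r *m I1malpha alpha) K i <= d.
Proof.
move=> hr hirr ha [j0 hj0].
have aj0 : 0 < alpha j0 by rewrite lt_def hj0; case/andP: (ha j0).
have Q0 := Q_nonneg hr ha; have Q1 := Q_rows hr ha.
have H : forall i, exists k, csum (r *m I1malpha alpha) k.+1 i < 1.
  move=> i.
  have [l rl] : exists l, 0 < r i l.
    by apply: sum_pos_witness; case: hr => _ ->; exact: ltr01.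
  have [k hk] : exists k, 0 < (r ^+ k) l j0 by apply: hirr; rewrite inE.
  exists k; apply: (c_lt1 hr ha aj0).
  rewrite exprS mxE (bigD1 l) //=.
  apply: (lt_le_trans (mulr_gt0 rl hk)); rewrite lerDl.
  apply: sumr_ge0 => x _; apply: mulr_ge0; first by case: hr.
  by apply: expr_ge0; case: hr.
have [f hf] := choice H.
set K := (\max_i f i).+1.
have hK : forall i, csum (r *m I1malpha alpha) K i < 1.
  move=> i; have le : ((f i).+1 <= K)%N by rewrite ltnS leq_bigmax.
  rewrite -(subnKC le); exact: le_lt_trans (csum_mono Q0 Q1 _ _ _) (hf i).
exists K, (\big[Order.max/0]_i csum (r *m I1malpha alpha) K i); split.
  by apply: bigmax_lt => //; exact: ltr01.
by move=> i; exact: le_bigmax.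
Qed.

Definition Smx {R : realType} {n : nat} (A : 'M[R]_n.+1) : 'M[R]_n.+1 :=
  \matrix_(i, j) limn (fun N => (\sum_(k < N) A ^+ k) i j).

Lemma Sconv (R : realType) (n : nat) (A : 'M[R]_n.+1) :
  (forall i j, 0 <= A i j) -> (forall i, \sum_j A i j <= 1) ->
  (exists K d, d < 1 /\ forall i, csum A K i <= d) ->
  forall i j, (fun N => (\sum_(k < N) A ^+ k) i j) @ \oo --> Smx A i j.
Proof.
move=> H0 H1 [K [d [d1 hK]]] i j.
rewrite /Smx mxE.
have cv : cvgn (fun N => (\sum_(k < N) A ^+ k) i j).
  apply: nondecreasing_is_cvgn.
    move=> N M NM; rewrite !summxE -(subnKC NM).
    apply: (@sum_widen _ (fun k => (A ^+ k) i j)) => k; exact: expr_ge0.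
  exists (K%:R / (1 - d)) => _ [N _ <-].
  rewrite summxE; apply: le_trans (csum_bound H0 H1 d1 hK N i).
  apply: ler_sum => k _; rewrite /csum (bigD1 j) //= lerDl.
  apply: sumr_ge0 => x _; exact: expr_ge0.
exact: cv.
Qed.

Lemma SN_S (R : realType) (n : nat) (A : 'M[R]_n.+1) N :
  \sum_(k < N.+1) A ^+ k = 1%:M + A *m \sum_(k < N) A ^+ k.
Proof.
rewrite big_ord_recl expr0 mulmx_sumr; congr (_ + _).
by apply: eq_bigr => k _; rewrite exprS mulmxE.
Qed.

Lemma S_eq (R : realType) (n : nat) (A : 'M[R]_n.+1) :
  (forall i j, 0 <= A i j) -> (forall i, \sum_j A i j <= 1) ->
  (exists K d, d < 1 /\ forall i, csum A K i <= d) ->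
  Smx A = 1%:M + A *m Smx A.
Proof.
move=> H0 H1 HK; have cv := Sconv H0 H1 HK.
apply/matrixP => i j.
have c1 : (fun N => (\sum_(k < N.+1) A ^+ k) i j) @ \oo --> Smx A i j.
  by rewrite (cvg_shiftS (fun N => (\sum_(k < N) A ^+ k) i j)); exact: cv.
have c2 : (fun N => (\sum_(k < N.+1) A ^+ k) i j) @ \oo --> (1%:M + A *m Smx A) i j.
  have -> : (fun N => (\sum_(k < N.+1) A ^+ k) i j) =
     (fun N => (1%:M : 'M[R]_n.+1) i j + \sum_x A i x * (\sum_(k < N) A ^+ k) x j).
    by apply: funext => N; rewrite SN_S !mxE.
  rewrite !mxE; apply: cvgD; first exact: cvg_cst.
  apply: cvg_sumfin => x; apply: cvgMl_tmp; exact: cv.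
exact: (cvg_unique _ c1 c2).
Qed.

Definition fcons {T : Type} {k : nat} (x : T) (p : {ffun 'I_k -> T}) : {ffun 'I_k.+1 -> T} :=
  [ffun m : 'I_k.+1 => if unlift ord0 m is Some m' then p m' else x].

Lemma fcons0 (T : Type) k (x : T) (p : {ffun 'I_k -> T}) : fcons x p ord0 = x.
Proof. by rewrite /fcons ffunE unlift_none. Qed.

Lemma fconsS (T : Type) k (x : T) (p : {ffun 'I_k -> T}) m : fcons x p (lift ord0 m) = p m.
Proof. by rewrite /fcons ffunE liftK. Qed.

Lemma sum_ffun_split (R : realType) (S : finType) k (G : {ffun 'I_k.+1 -> S} -> R) :
  \sum_p G p = \sum_x \sum_(p : {ffun 'I_k -> S}) G (fcons x p).
Proof.
rewrite pair_big /=.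
pose h := fun xp : S * {ffun 'I_k -> S} => fcons xp.1 xp.2.
pose g := fun p : {ffun 'I_k.+1 -> S} => (p ord0, [ffun m => p (lift ord0 m)]).
have hg : cancel g h.
  move=> p; apply/ffunP => m; rewrite /h /g /= /fcons ffunE.
  by case: unliftP => [m' ->|->]; rewrite ?ffunE.
have gh : cancel h g.
  move=> [x p]; rewrite /h /g /= fcons0; congr (_, _).
  by apply/ffunP => m; rewrite ffunE fconsS.
rewrite (reindex h) //; exact: onW_bij (Bijective gh hg).
Qed.

Lemma pnode_fcons (n : nat) k (i x : 'I_n.+1) (p : {ffun 'I_k -> 'I_n.+1}) m :
  (m <= k)%N -> pnode i (fcons x p) m.+1 = pnode x p m.
Proof.
move=> mk; rewrite /pnode.
case: insubP => [u hu vu|]; last by rewrite ltnS mk.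
case: m mk hu vu => [|m] mk hu vu /=.
  have -> : u = ord0 :> 'I_k.+1 by apply: val_inj; rewrite /= vu.
  exact: fcons0.
case: insubP => [w hw vw|]; last by rewrite mk.
have -> : u = lift ord0 w :> 'I_k.+1 by apply: val_inj; rewrite /= vu /bump /= vw.
by rewrite fconsS.
Qed.

Lemma skip_wE (R : realType) (n : nat) (r : 'M[R]_n.+1) (alpha : 'I_n.+1 -> R) k i j :
  skip_w r alpha k i j = ((r *m I1malpha alpha) ^+ k *m (r *m Ialpha alpha)) i j.
Proof.
elim: k i => [|k IH] i.
  rewrite /skip_w expr0 mul1mx AE.
  under eq_bigr do rewrite big_ord0 mul1r /=.
  by rewrite sumr_const card_ffun !card_ord expn0.
rewrite /skip_w sum_ffun_split exprS -mulmxE -mulmxA mxE.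
apply: eq_bigr => x _.
rewrite -IH /skip_w mulr_sumr; apply: eq_bigr => p _.
rewrite big_ord_recl fcons0 (_ : pnode i (fcons x p) ord0 = i) // -QE -!mulrA; congr (_ * _).
rewrite (pnode_fcons _ _ _ (leqnn k)); congr (_ * _).
apply: eq_bigr => m _.
by rewrite lift0 (pnode_fcons _ _ _ (ltnW (ltn_ord m))) fconsS.
Qed.

Lemma sum_pair_bool (R : realType) (S : finType) (G : S * bool -> R) :
  \sum_x G x = \sum_s (G (s, false) + G (s, true)).
Proof.
rewrite (eq_bigr (fun p => G (p.1, p.2))); last by case.
rewrite -(pair_bigA _ (fun s b => G (s, b))) /=; apply: eq_bigr => s _; by rewrite big_bool addrC.
Qed.

Lemma aux_distE (R : realType) (n : nat) (r : 'M[R]_n.+1) (alpha : 'I_n.+1 -> R) m i :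
  (forall x, aux_dist r alpha m (i, false) (x, false) = ((r *m I1malpha alpha) ^+ m) i x) /\
  (forall j, aux_dist r alpha m (i, false) (j, true) =
     (\sum_(k < m) (r *m I1malpha alpha) ^+ k *m (r *m Ialpha alpha)) i j).
Proof.
elim: m => [|m [IH1 IH2]].
  split=> x /=.
    have e1 : (1 : 'M[R]_n.+1) = 1%:M by [].
    by rewrite expr0 e1 mxE xpair_eqE andbT.
  by rewrite summxE big_ord0 xpair_eqE andbF.
split=> x /=; rewrite sum_pair_bool /aux_P /=.
  rewrite exprSr -mulmxE mxE; apply: eq_bigr => s _.
  by rewrite IH1 QE xpair_eqE andbF mulr0 addr0.
rewrite [RHS]summxE [RHS]big_ord_recr /= big_split /= addrC; congr (_ + _).
  rewrite (bigD1 x) //= xpair_eqE eqxx andbT mulr1 big1 ?addr0.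
    by rewrite IH2 summxE.
  move=> s sx; rewrite xpair_eqE andbT (negbTE sx) mulr0 //.
rewrite mxE; apply: eq_bigr => s _; by rewrite IH1 AE.
Qed.

Lemma Smx_ge0 (R : realType) (n : nat) (A : 'M[R]_n.+1) :
  (forall i j, 0 <= A i j) -> (forall i, \sum_j A i j <= 1) ->
  (exists K d, d < 1 /\ forall i, csum A K i <= d) ->
  forall i j, 0 <= Smx A i j.
Proof.
move=> H0 H1 HK i j.
have cv := @Sconv _ _ A H0 H1 HK i j.
rewrite -(cvg_lim _ cv) //; apply: limr_ge; first by apply/cvg_ex; eexists; exact: cv.
apply: nearW => N; rewrite summxE; apply: sumr_ge0 => k _; exact: expr_ge0.
Qed.

Lemma reach (R : realType) (n : nat) (r M : 'M[R]_n.+1) (alpha : 'I_n.+1 -> R) :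
  stochastic r -> (forall j, 0 <= alpha j <= 1) ->
  (forall i j, 0 <= M i j) ->
  M = r *m Ialpha alpha + (r *m I1malpha alpha) *m M ->
  forall m a b, 0 < alpha b -> 0 < (r ^+ m.+1) a b -> exists s, 0 < (M ^+ s) a b.
Proof.
move=> hr ha M0 hM.
have Q0 := Q_nonneg hr ha.
have geA : forall a x, r a x * alpha x <= M a x.
  move=> a x; rewrite (_ : M a x = (r *m Ialpha alpha + (r *m I1malpha alpha) *m M) a x); last by rewrite -hM.
  rewrite mxE AE lerDl.
  rewrite mxE; apply: sumr_ge0 => l _; exact: mulr_ge0.
have geQ : forall a l x, r a l * (1 - alpha l) * M l x <= M a x.
  move=> a l x; rewrite (_ : M a x = (r *m Ialpha alpha + (r *m I1malpha alpha) *m M) a x); last by rewrite -hM.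
  rewrite mxE ler_wpDl //.
    rewrite AE; apply: mulr_ge0; first by case: hr.
    by case/andP: (ha x).
  by rewrite mxE (bigD1 l) //= QE lerDl; apply: sumr_ge0 => y _; exact: mulr_ge0.
have Mpow0 := expr_ge0 M0.
elim=> [|m IH] a b hb.
  rewrite expr1 => rab; exists 1%N; rewrite expr1.
  by apply: lt_le_trans (geA a b); apply: mulr_gt0.
rewrite exprS mxE => /sum_pos_witness [l hl].
have rl : 0 < r a l by apply: prod_pos_l hl; case: hr.
have rl2 : 0 < (r ^+ m.+1) l b.
  by apply: prod_pos_r hl; apply: expr_ge0; case: hr.
have [s hs] := IH l b hb rl2.
have [al0|alpos] := eqVneq (alpha l) 0.
  case: s hs => [|s] hs.
    move: hs; rewrite expr0 mxE; case: eqP => [lb|]; last by rewrite ltxx.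
    by move: hb; rewrite -lb al0 ltxx.
  exists s.+1; move: hs; rewrite !exprS !mxE => hs.
  apply: lt_le_trans (_ : r a l * \sum_x M l x * (M ^+ s) x b <= _).
    by apply: mulr_gt0.
  rewrite mulr_sumr; apply: ler_sum => x _; rewrite mulrA.
  apply: ler_wpM2r; first exact: Mpow0.
  by have := geQ a l x; rewrite al0 subr0 mulr1.
exists s.+1; rewrite exprS mxE (bigD1 l) //=.
apply: lt_le_trans (_ : M a l * (M ^+ s) l b <= _).
  apply: mulr_gt0 => //; apply: lt_le_trans (geA a l); apply: mulr_gt0 => //.
  by rewrite lt_def alpos; case/andP: (ha l).
rewrite lerDl; apply: sumr_ge0 => x _; apply: mulr_ge0 => //; exact: Mpow0.
Qed.

Unset Implicit Arguments.

Theorem theorem2p2 (R : realType) (n : nat) (r : 'M[R]_n.+1) (alpha : 'I_n.+1 -> R) :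
  stochastic r -> irreducible r ->
  (forall j, 0 <= alpha j <= 1) -> (exists j, alpha j != 0) ->
  [/\ (forall i j, rskip r alpha i j = aux_exit r alpha i j),
      irreducible_on (~: Bset alpha) (rskip r alpha),
      (forall i j,
         (fun N => (\sum_(k < N) ((r *m I1malpha alpha) ^+ k *m r *m Ialpha alpha)) i j)
           @ \oo --> rskip r alpha i j),
      (1%:M - r *m I1malpha alpha) \in unitmx &
      rskip r alpha = invmx (1%:M - r *m I1malpha alpha) *m r *m Ialpha alpha].
Proof.
move=> hr hirr ha hj.
set Q := r *m I1malpha alpha; set A := r *m Ialpha alpha.
have Q0 : forall i j, 0 <= Q i j := Q_nonneg hr ha.
have Q1 : forall i, \sum_j Q i j <= 1 := Q_rows hr ha.
have HK := exists_K hr hirr ha hj.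
have hS : Smx Q = 1%:M + Q *m Smx Q := S_eq Q0 Q1 HK.
have hinv : (1%:M - Q) *m Smx Q = 1%:M.
  by rewrite mulmxBl mul1mx {1}hS addrK.
have hunit : (1%:M - Q) \in unitmx := (mulmx1_unit hinv).1.
have hinvE : invmx (1%:M - Q) = Smx Q.
  have := congr1 (mulmx (invmx (1%:M - Q))) hinv.
  by rewrite mulmxA mulVmx // mul1mx mulmx1 => <-.
have seqE : forall N i j, (\sum_(k < N) (Q ^+ k *m r *m Ialpha alpha)) i j =
                         ((\sum_(k < N) Q ^+ k) *m A) i j.
  by move=> N i j; rewrite mulmx_suml !summxE; apply: eq_bigr => k _; rewrite /A mulmxA.
have cvA : forall i j, (fun N => ((\sum_(k < N) Q ^+ k) *m A) i j) @ \oo --> (Smx Q *m A) i j.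
  move=> i j; rewrite mxE.
  have -> : (fun N => ((\sum_(k < N) Q ^+ k) *m A) i j) =
            (fun N => \sum_x (\sum_(k < N) Q ^+ k) i x * A x j).
    by apply: funext => N; rewrite mxE.
  apply: cvg_sumfin => x; apply: cvgMr_tmp; exact: (@Sconv _ _ Q Q0 Q1 HK i x).
have skE : forall N i j, \sum_(k < N) skip_w r alpha k i j = ((\sum_(k < N) Q ^+ k) *m A) i j.
  move=> N i j; rewrite mulmx_suml summxE; apply: eq_bigr => k _; exact: skip_wE.
have rskE : rskip r alpha = Smx Q *m A.
  apply/matrixP => i j; rewrite /rskip mxE.
  have -> : (fun N => \sum_(k < N) skip_w r alpha k i j) =
            (fun N => ((\sum_(k < N) Q ^+ k) *m A) i j).
    by apply: funext => N; exact: skE.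
  exact: cvg_lim (cvA i j).
split.
- move=> i j; rewrite /rskip /aux_exit mxE; congr (limn _); apply: funext => N.
  rewrite skE ((aux_distE r alpha N i).2 j) mulmx_suml !summxE.
  by apply: eq_bigr => k _.
- have M0 : forall i j, 0 <= rskip r alpha i j.
    move=> i j; rewrite rskE mxE; apply: sumr_ge0 => x _; apply: mulr_ge0.
      exact: Smx_ge0.
    by rewrite /A AE; apply: mulr_ge0; [case: hr | case/andP: (ha j)].
  have hM : rskip r alpha = A + Q *m rskip r alpha.
    by rewrite rskE {1}hS mulmxDl mul1mx mulmxA.
  move=> a b; rewrite !inE => ha0 hb0.
  have [k hk] : exists k, 0 < (r ^+ k) a b by apply: hirr; rewrite inE.
  case: k hk => [|m] hk.
    by exists 0%N; move: hk; rewrite !expr0.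
  apply: (@reach R n r (rskip r alpha) alpha hr ha M0 hM m a b) => //.
  by rewrite lt_def hb0; case/andP: (ha b).
- move=> i j.
  have -> : (fun N => (\sum_(k < N) (Q ^+ k *m r *m Ialpha alpha)) i j) =
            (fun N => ((\sum_(k < N) Q ^+ k) *m A) i j).
    by apply: funext => N; exact: seqE.
  by rewrite rskE; exact: cvA.
- exact: hunit.
- by rewrite rskE hinvE mulmxA.
Qed.
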